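(* Let $\lambda<0$, $a>0$, $c\in\mathbb{R}$, and let $\Omega=[\omega^-,\omega^+]$ with $\omega^-<0<\omega^+$. Consider the control system on $\mathbb{R}^2$ $$\dot s=\omega,\qquad \dot t=\lambda t+\omega(c+as),\qquad \omega\in\Omega .$$ For $\omega\in\Omega$ define $F_\omega:\mathbb{R}^2\to\mathbb{R}$, $F_\omega(s,t)=\lambda^2 t+\omega\big(\lambda(c+as)+a\omega\big)$. Let $\mathbf v_a=(-c/a,0)$; for constant control $\omega$ the solution from $\mathbf v_a$ is $\varphi(\tau,\mathbf v_a,\omega)=\big(-\tfrac ca+\tau\omega,\ \tfrac{a\omega^2}{\lambda^2}(e^{\lambda\tau}-\lambda\tau-1)\big)$. Define $$\mathcal C^-=\{\mathbf v\in\mathbb{R}^2: F_{\omega^-}(\mathbf v)<0\text{ and }F_{\omega^+}(\mathbf v)<0\},$$ $$\mathcal C^+=\{(s,t)\in\mathbb{R}^2:\ \exists\,\tau\ge 0,\ \exists\,\omega\in\{\omega^-,\omega^+\}\text{ with } s=\varphi_1(\tau,\mathbf v_a,\omega)\text{ and } t>\varphi_2(\tau,\mathbf v_a,\omega)\}.$$ Then: (1) $\mathcal C^-$ and $\mathcal C^+$ are invariant in negative time: for every constant control $\omega\in\Omega$, every $\mathbf v$ in the set and every $\tau\le 0$, $\varphi(\tau,\mathbf v,\omega)$ lies in the same set. (2) For any $\omega_1,\omega_2\in\Omega$ with $\omega_1<0<\omega_2$, the region $\mathcal C(\omega_1,\omega_2)=\{\mathbf v\in\mathbb{R}^2: F_{\omega_1}(\mathbf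 v)\,F_{\omega_2}(\mathbf v)<0\}$ is controllable, i.e. for any $\mathbf v,\mathbf w\in\mathcal C(\omega_1,\omega_2)$ there exist a piecewise constant control $\omega(\cdot)$ with values in $\Omega$ and $\tau\ge0$ with $\varphi(\tau,\mathbf v,\omega)=\mathbf w$.
   Context: $\varphi(\tau,\mathbf v,\omega)=(\varphi_1,\varphi_2)$ denotes the solution of the system at time $\tau$ starting at $\mathbf v$ with control $\omega$ (controls are piecewise constant functions with values in $\Omega$). *)

(* Defs.v *)
From Stdlib Require Import Reals Lra List.
Open Scope R_scope.

(* Flow of  s' = w,  t' = lam t + w (c + a s)  with constant control w,
   starting at v = (s0,t0) at time 0, evaluated at time tau (any real tau).
   This is the explicit solution of the linear ODE (valid for lam <> 0). *)
Definition phi (lam a c : R) (tau : R) (v : R * R) (w : R) : R * R :=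
  let s0 := fst v in
  let t0 := snd v in
  let k := a * w * w in
  let b := w * (c + a * s0) in
  let A := - k / (lam * lam) - b / lam in
  let B := - k / lam in
  (s0 + tau * w, A + B * tau + (t0 - A) * exp (lam * tau)).

Lemma phi_init lam a c v w : phi lam a c 0 v w = v.
Proof.
  destruct v as [s0 t0]; unfold phi; simpl.
  rewrite !Rmult_0_r, exp_0; f_equal; ring.
Qed.

Lemma phi_solves lam a c v w tau : lam <> 0 ->
  derivable_pt_lim (fun u => fst (phi lam a c u v w)) tau w /\
  derivable_pt_lim (fun u => snd (phi lam a c u v w)) tau
     (lam * snd (phi lam a c tau v w) + w * (c + a * fst (phi lam a c tau v w))).
Proof.
  intro Hl; destruct v as [s0 t0]; unfold phi; simpl; split.
  - assert (H : derivable_pt_lim (fun u => s0 + u * w) tau (0 + (1 * w + tau * 0))).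
    { apply (derivable_pt_lim_plus (fun _ => s0) (fun u => u * w)).
      + apply derivable_pt_lim_const.
      + apply (derivable_pt_lim_mult id (fun _ => w)).
        * apply derivable_pt_lim_id.
        * apply derivable_pt_lim_const. }
    replace (0 + (1 * w + tau * 0)) with w in H by ring. exact H.
  - set (A := - (a * w * w) / (lam * lam) - w * (c + a * s0) / lam).
    set (B := - (a * w * w) / lam).
    assert (H : derivable_pt_lim
      (fun u => A + B * u + (t0 - A) * exp (lam * u)) tau
      (0 + B * 1 + (t0 - A) * (exp (lam * tau) * (lam * 1)))).
    { apply derivable_pt_lim_plus.
      - apply derivable_pt_lim_plus; [apply derivable_pt_lim_const|].
        apply derivable_pt_lim_scal with (f := id). apply derivable_pt_lim_id.
      - apply derivable_pt_lim_scal with (f := fun u => exp (lam * u)).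
        apply (derivable_pt_lim_comp (fun u => lam * u) exp).
        + apply derivable_pt_lim_scal with (f := id). apply derivable_pt_lim_id.
        + apply derivable_pt_lim_exp. }
    match goal with |- derivable_pt_lim _ _ ?l => replace l with
      (0 + B * 1 + (t0 - A) * (exp (lam * tau) * (lam * 1))) end.
    + exact H.
    + unfold A, B; field; exact Hl.
Qed.

Definition F (lam a c w : R) (v : R * R) : R :=
  lam ^ 2 * snd v + w * (lam * (c + a * fst v) + a * w).

Definition va (a c : R) : R * R := (- c / a, 0).

Definition Cminus (lam a c wm wp : R) (v : R * R) : Prop :=
  F lam a c wm v < 0 /\ F lam a c wp v < 0.

Definition Cplus (lam a c wm wp : R) (v : R * R) : Prop :=
  exists tau w, 0 <= tau /\ (w = wm \/ w = wp) /\
    fst v = fst (phi lam a c tau (va a c) w) /\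
    snd v > snd (phi lam a c tau (va a c) w).

Definition Creg (lam a c w1 w2 : R) (v : R * R) : Prop :=
  F lam a c w1 v * F lam a c w2 v < 0.

(* A piecewise constant control with values in [wm,wp] on [0,tau], tau >= 0,
   is encoded as a finite list of pieces (duration d_i >= 0, value w_i);
   tau = sum of the d_i, and the trajectory is the concatenation of
   constant-control flows. *)
Definition admissible (wm wp : R) (ctrl : list (R * R)) : Prop :=
  Forall (fun p => 0 <= fst p /\ wm <= snd p <= wp) ctrl.

Definition run (lam a c : R) (ctrl : list (R * R)) (v : R * R) : R * R :=
  fold_left (fun x p => phi lam a c (fst p) x (snd p)) ctrl v.

Definition reachable (lam a c wm wp : R) (v w : R * R) : Prop :=
  exists ctrl, admissible wm wp ctrl /\ run lam a c ctrl v = w.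

(* Main.v *)
Require Import Defs.
From Stdlib Require Import Reals Lra Lia List.
Open Scope R_scope.

Lemma Fphi lam a c u q tau v : lam <> 0 ->
  F lam a c u (phi lam a c tau v q) =
  F lam a c u v + F lam a c q v * (exp (lam*tau) - 1) - lam*a*q*(q-u)*tau.
Proof. intro H; destruct v as [s t]; unfold F, phi; simpl; field; auto. Qed.

Lemma phi_comp lam a c t1 t2 v q : lam <> 0 ->
  phi lam a c (t1 + t2) v q = phi lam a c t2 (phi lam a c t1 v q) q.
Proof. intro H; destruct v as [s t]; unfold phi; simpl.
  replace (lam*(t1+t2)) with (lam*t1 + lam*t2) by ring; rewrite exp_plus; f_equal; [ring|field; auto]. Qed.

Definition P (lam a c r1 r2 : R) : R*R := (-(r1+r2)/lam - c/a, a*r1*r2/(lam*lam)).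

Lemma FP lam a c u r1 r2 : lam <> 0 -> a <> 0 -> F lam a c u (P lam a c r1 r2) = a*(u-r1)*(u-r2).
Proof. intros; unfold F, P; simpl; field; auto. Qed.

Lemma line_move lam a c r1 r2 tau : lam <> 0 -> a <> 0 ->
  phi lam a c tau (P lam a c r1 r2) r1 = P lam a c r1 (r2 - lam*r1*tau).
Proof. intros; unfold phi, P; simpl. f_equal; field; auto. Qed.

Lemma sign_div x y : y <> 0 -> x / y = x*y / (y*y).
Proof. intros; field; auto. Qed.

Lemma P_sym lam a c r1 r2 : P lam a c r1 r2 = P lam a c r2 r1.
Proof. unfold P. replace (r1+r2) with (r2+r1) by ring. replace (a*r1*r2) with (a*r2*r1) by ring. reflexivity. Qed.

Lemma rootrep lam a c rho z : lam <> 0 -> a <> 0 -> F lam a c rho z = 0 ->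
  z = P lam a c rho (-(lam*(fst z + c/a)) - rho).
Proof.
  intros Hl Ha H. destruct z as [s t]; unfold F, P in *; cbn [fst snd] in *.
  f_equal; [field; auto|].
  apply Rmult_eq_reg_l with (lam*lam); [|intro; apply Hl; nra].
  replace (lam*lam*t) with (lam^2*t) by ring.
  replace (lam ^ 2 * t) with (- (rho * (lam * (c + a * s) + a * rho))) by lra.
  field; auto.
Qed.

Lemma eqXY lam a c u1 u2 z z' : lam <> 0 -> a <> 0 -> u1 <> u2 ->
  F lam a c u1 z = F lam a c u1 z' -> F lam a c u2 z = F lam a c u2 z' -> z = z'.
Proof.
  intros Hl Ha Hu H1 H2. destruct z as [s t], z' as [s' t']; unfold F in *; cbn [fst snd] in *.
  assert (E : (u2-u1)*lam*a*(s-s') = 0) by (revert H1 H2; intros; nra).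
  assert (s = s').
  { apply Rmult_integral in E; destruct E as [E|E]; [|lra].
    apply Rmult_integral in E; destruct E as [E|E]; [|contradiction].
    apply Rmult_integral in E; destruct E as [E|E]; [lra|contradiction]. }
  subst s'. f_equal.
  assert (lam*lam*(t - t') = 0) by nra.
  apply Rmult_integral in H; destruct H as [H|H]; [|lra].
  apply Rmult_integral in H; destruct H; contradiction.
Qed.

Lemma reach_refl lam a c wm wp v : reachable lam a c wm wp v v.
Proof. exists nil; split; [constructor|reflexivity]. Qed.

Lemma reach_trans lam a c wm wp u v w : reachable lam a c wm wp u v ->
  reachable lam a c wm wp v w -> reachable lam a c wm wp u w.
Proof.
  intros [c1 [A1 R1]] [c2 [A2 R2]]. exists (c1 ++ c2). split.
  - apply Forall_app; auto.
  - unfold run in *. rewrite fold_left_app, R1. exact R2.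
Qed.

Lemma reach_step lam a c wm wp v q tau : wm <= q <= wp -> 0 <= tau ->
  reachable lam a c wm wp v (phi lam a c tau v q).
Proof.
  intros Hq Ht. exists ((tau,q)::nil). split.
  - constructor; [simpl; auto|constructor].
  - reflexivity.
Qed.

Lemma exp_sq y : 0 <= y -> 1 + y + y^2/4 <= exp y.
Proof.
  intro Hy. replace y with (y/2 + y/2) at 3 by field. rewrite exp_plus.
  pose proof (exp_ineq1_le (y/2)). nra.
Qed.

Lemma back_step lam a c wm wp u1 u2 w : lam < 0 -> 0 < a -> wm <= u1 <= wp -> u1*u2 < 0 ->
  0 < F lam a c u1 w -> F lam a c u2 w < 0 ->
  exists z, reachable lam a c wm wp z w /\ F lam a c u2 z = 0 /\ F lam a c u1 w <= F lam a c u1 z.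
Proof.
  intros Hl Ha Hu1 Hu12 HX HY.
  set (X := F lam a c u1 w) in *. set (Y := F lam a c u2 w) in *.
  set (k1 := - lam*a*u1*(u1-u2)).
  assert (Hk1 : 0 < k1).
  { unfold k1. assert (0 < u1*(u1-u2)) by nra.
    replace (- lam * a * u1 * (u1 - u2)) with ((-lam)*a*(u1*(u1-u2))) by ring.
    apply Rmult_lt_0_compat; [apply Rmult_lt_0_compat|]; lra. }
  set (g := fun T => Y + X*(exp (lam*(-T)) - 1) - lam*a*u1*(u1-u2)*(-T)).
  assert (HL : 0 < lam^2) by nra.
  set (Ts := 4*(k1+1)/(X*lam^2) + (-Y)).
  assert (HT1 : 4*(k1+1)/(X*lam^2) > 0).
  { unfold Rdiv. apply Rmult_lt_0_compat; [lra|]. apply Rinv_0_lt_compat. nra. }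
  assert (HTs : 0 <= Ts) by (unfold Ts; lra).
  assert (Hg0 : g 0 = Y) by (unfold g; rewrite Ropp_0, Rmult_0_r, exp_0; ring).
  assert (HgT : 0 <= g Ts).
  { unfold g. set (y := lam * (- Ts)).
    assert (Hy : 0 <= y) by (unfold y; nra).
    pose proof (exp_sq y Hy).
    assert (X*(exp y - 1) >= X*(y^2/4)) by nra.
    assert (y^2 = lam^2 * Ts^2) by (unfold y; ring).
    assert (X*lam^2*Ts/4 >= k1 + 1).
    { assert (Ts >= 4*(k1+1)/(X*lam^2)) by (unfold Ts; lra).
      assert (X*lam^2 * (4*(k1+1)/(X*lam^2)) = 4*(k1+1)) by (field; split; lra).
      assert (0 < X*lam^2) by nra. nra. }
    assert (X*(y^2/4) >= (k1+1)*Ts) by nra.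
    replace (lam * a * u1 * (u1 - u2) * - Ts) with (k1 * Ts) by (unfold k1; ring).
    assert (Ts >= -Y) by (unfold Ts; lra). nra. }
  destruct (IVT_cor g 0 Ts ltac:(unfold g; reg) HTs ltac:(rewrite Hg0; nra)) as [T1 [HT1r HgT1]].
  exists (phi lam a c (-T1) w u1). split; [|split].
  - replace w with (phi lam a c T1 (phi lam a c (-T1) w u1) u1) at 2.
    + apply reach_step; lra.
    + rewrite <- phi_comp by lra. replace (-T1 + T1) with 0 by ring. apply phi_init.
  - rewrite Fphi by lra. exact HgT1.
  - rewrite Fphi by lra. fold X. replace (u1 - u1) with 0 by ring.
    pose proof (exp_ineq1_le (lam*(-T1))). assert (0 <= lam*(-T1)) by nra. nra.
Qed.

Lemma exp_le x y : x <= y -> exp x <= exp y.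
Proof. intro H; destruct (Rle_lt_or_eq_dec _ _ H) as [H'|H']; [left; apply exp_increasing; auto|subst; lra]. Qed.

Lemma fwd_axis lam a c wm wp u1 u2 v eps : lam < 0 -> 0 < a -> wm <= u1 <= wp -> wm <= u2 <= wp ->
  u1*u2 < 0 -> 0 < F lam a c u1 v -> F lam a c u2 v < 0 -> 0 < eps ->
  exists z, reachable lam a c wm wp v z /\ F lam a c u2 z = 0 /\
     0 < F lam a c u1 z /\ F lam a c u1 z <= eps.
Proof.
  intros Hl Ha Hu1 Hu2 Hu12 HX HY He.
  set (X := F lam a c u1 v) in *. set (Y := F lam a c u2 v) in *.
  set (k1 := - lam*a*u1*(u1-u2)). set (k2 := - lam*a*u2*(u2-u1)). set (L := - lam).
  assert (HL : 0 < L) by (unfold L; lra).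
  assert (Hk1 : 0 < k1).
  { unfold k1. assert (0 < u1*(u1-u2)) by nra.
    replace (- lam * a * u1 * (u1 - u2)) with ((-lam)*a*(u1*(u1-u2))) by ring.
    apply Rmult_lt_0_compat; [apply Rmult_lt_0_compat|]; lra. }
  assert (Hk2 : 0 < k2).
  { unfold k2. assert (0 < u2*(u2-u1)) by nra.
    replace (- lam * a * u2 * (u2 - u1)) with ((-lam)*a*(u2*(u2-u1))) by ring.
    apply Rmult_lt_0_compat; [apply Rmult_lt_0_compat|]; lra. }
  set (K := 16*k1^2/L^2).
  assert (HK : 0 < K) by (unfold K; unfold Rdiv; apply Rmult_lt_0_compat; [nra|apply Rinv_0_lt_compat; nra]).
  set (M := K/eps + 2*k1/L).
  assert (HM1 : 0 < K/eps) by (unfold Rdiv; apply Rmult_lt_0_compat; [lra|apply Rinv_0_lt_compat; lra]).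
  assert (HM2 : 0 < 2*k1/L) by (unfold Rdiv; apply Rmult_lt_0_compat; [lra|apply Rinv_0_lt_compat; lra]).
  set (tau0 := M/k2).
  assert (Ht0 : 0 <= tau0) by (unfold tau0, Rdiv; apply Rmult_le_pos; [unfold M; lra|left; apply Rinv_0_lt_compat; lra]).
  set (v0 := phi lam a c tau0 v u2).
  set (X0 := F lam a c u1 v0). set (Y0 := F lam a c u2 v0).
  assert (HE0 : exp (lam*tau0) <= 1) by (rewrite <- exp_0; apply exp_le; nra).
  assert (HE0' : 0 < exp (lam*tau0)) by apply exp_pos.
  assert (HX0 : X0 >= M).
  { unfold X0, v0. rewrite Fphi by lra. fold X Y.
    assert (k2*tau0 = M) by (unfold tau0; field; lra).
    assert (lam*a*u2*(u2-u1)*tau0 = -(k2*tau0)) by (unfold k2; ring). nra. }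
  assert (HX0' : X + Y * (exp (lam * tau0) - 1) - lam * a * u2 * (u2 - u1) * tau0 = X0) by
    (unfold X0, v0; rewrite Fphi by lra; reflexivity).
  assert (HY0 : Y0 < 0).
  { unfold Y0, v0. rewrite Fphi by lra. fold Y. replace (u2 - u2) with 0 by ring. nra. }
  assert (HX0p : 0 < X0) by (unfold M in HX0; lra).
  set (ta := X0/(2*k1)).
  assert (Hta : 0 < ta) by (unfold ta, Rdiv; apply Rmult_lt_0_compat; [lra|apply Rinv_0_lt_compat; lra]).
  set (ua := L*ta).
  assert (Hua1 : 1 <= ua).
  { unfold ua, ta. assert (X0 >= 2*k1/L) by (unfold M in HX0; lra).
    assert (L * (2*k1/L) = 2*k1) by (field; lra).
    assert (L*X0 >= 2*k1) by nra.
    replace (L * (X0 / (2 * k1))) with ((L*X0)/(2*k1)) by (field; lra).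
    apply Rmult_le_reg_r with (2*k1); [lra|]. replace (L * X0 / (2 * k1) * (2 * k1)) with (L*X0) by (field; lra). lra. }
  pose proof (exp_sq ua ltac:(lra)) as Hsq.
  set (Ea := exp (lam*ta)).
  assert (HEa : Ea * exp ua = 1).
  { unfold Ea, ua, L. rewrite <- exp_plus. replace (lam*ta + - lam * ta) with 0 by ring. apply exp_0. }
  assert (HEap : 0 < Ea) by apply exp_pos.
  assert (HEa2 : Ea <= 1/2) by nra.
  set (h := fun t => Y0 + X0*(exp (lam*t) - 1) - lam*a*u1*(u1-u2)*t).
  assert (Hha : h ta < 0).
  { unfold h. fold Ea.
    assert (lam * a * u1 * (u1 - u2) * ta = - (k1*ta)) by (unfold k1; ring).
    assert (k1*ta = X0/2) by (unfold ta; field; lra). nra. }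
  set (tb := ta + (X0 - Y0)/k1).
  assert (Htb : ta <= tb).
  { unfold tb. assert (0 <= (X0 - Y0)/k1) by (unfold Rdiv; apply Rmult_le_pos; [lra|left; apply Rinv_0_lt_compat; lra]). lra. }
  assert (Hhb : 0 < h tb).
  { unfold h. pose proof (exp_pos (lam*tb)).
    assert (lam * a * u1 * (u1 - u2) * tb = - (k1*tb)) by (unfold k1; ring).
    assert (k1*tb = k1*ta + (X0 - Y0)) by (unfold tb; field; lra).
    assert (0 < k1*ta) by nra. nra. }
  destruct (IVT_cor h ta tb ltac:(unfold h; reg) Htb ltac:(nra)) as [t1 [Ht1 Hh1]].
  exists (phi lam a c t1 v0 u1). split; [|split; [|split]].
  - apply reach_trans with v0; [apply reach_step; lra|apply reach_step; lra].
  - rewrite Fphi by lra. exact Hh1.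
  - rewrite Fphi by lra. fold X0. replace (u1 - u1) with 0 by ring.
    pose proof (exp_pos (lam*t1)). nra.
  - rewrite Fphi by lra. fold X0. replace (u1 - u1) with 0 by ring.
    assert (exp (lam*t1) <= Ea) by (unfold Ea; apply exp_le; nra).
    assert (X0 * Ea <= eps).
    { assert (Hua2 : ua^2/4 = X0^2/K).
      { unfold ua, ta, K. field. lra. }
      assert (exp ua >= X0^2/K) by nra.
      assert (X0 = X0 * Ea * exp ua) by (rewrite Rmult_assoc, HEa; ring).
      assert (X0 * Ea * (X0^2/K) <= X0) by nra.
      assert (HH : X0*Ea*(X0^2/K)*K <= X0*K) by (apply Rmult_le_compat_r; lra).
      replace (X0*Ea*(X0^2/K)*K) with (X0*Ea*X0^2) in HH by (field; lra).
      assert (X0 * Ea <= K / X0).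
      { apply Rmult_le_reg_r with X0; [lra|]. replace (K / X0 * X0) with K by (field; lra). nra. }
      assert (K / X0 <= K / M).
      { unfold Rdiv. apply Rmult_le_compat_l; [lra|]. apply Rinv_le_contravar; [unfold M; lra|lra]. }
      assert (K / M <= eps).
      { apply Rmult_le_reg_r with M; [unfold M; lra|]. replace (K / M * M) with K by (field; unfold M; lra).
        assert (K/eps * eps = K) by (field; lra). unfold M. nra. }
      lra. }
    nra.
Qed.

Lemma G1 lam a c wm wp u1 u2 v w : lam < 0 -> 0 < a -> wm <= u1 <= wp -> wm <= u2 <= wp ->
  u1*u2 < 0 -> 0 < F lam a c u1 v -> F lam a c u2 v < 0 ->
  0 < F lam a c u1 w -> F lam a c u2 w < 0 -> reachable lam a c wm wp v w.
Proof.
  intros Hl Ha Hu1 Hu2 Hu12 Hv1 Hv2 Hw1 Hw2.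
  destruct (back_step lam a c wm wp u1 u2 w Hl Ha Hu1 Hu12 Hw1 Hw2) as [z [Rzw [Hz2 Hz1]]].
  destruct (fwd_axis lam a c wm wp u1 u2 v (F lam a c u1 z) Hl Ha Hu1 Hu2 Hu12 Hv1 Hv2 ltac:(lra))
    as [z' [Rvz' [Hz'2 [Hz'1 Hz'1e]]]].
  set (k2 := - lam*a*u2*(u2-u1)).
  assert (Hk2 : 0 < k2).
  { unfold k2. assert (0 < u2*(u2-u1)) by nra.
    replace (- lam * a * u2 * (u2 - u1)) with ((-lam)*a*(u2*(u2-u1))) by ring.
    apply Rmult_lt_0_compat; [apply Rmult_lt_0_compat|]; lra. }
  set (d := (F lam a c u1 z - F lam a c u1 z')/k2).
  assert (Hd : 0 <= d) by (unfold d, Rdiv; apply Rmult_le_pos; [lra|left; apply Rinv_0_lt_compat; lra]).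
  assert (Heq : phi lam a c d z' u2 = z).
  { assert (Hne : u1 <> u2) by (intro; subst; nra).
    apply (eqXY lam a c u1 u2 _ _ ltac:(lra) ltac:(lra) Hne).
    - rewrite Fphi by lra. rewrite Hz'2.
      assert (k2*d = F lam a c u1 z - F lam a c u1 z') by (unfold d; field; lra).
      assert (lam*a*u2*(u2-u1)*d = -(k2*d)) by (unfold k2; ring). lra.
    - rewrite Fphi by lra. rewrite Hz'2, Hz2. ring. }
  apply reach_trans with z'; auto.
  apply reach_trans with z; auto.
  rewrite <- Heq. apply reach_step; lra.
Qed.

Lemma G2 lam a c wm wp u1 u2 v : lam < 0 -> 0 < a -> wm < 0 < wp -> wm <= u1 <= wp -> wm <= u2 <= wp ->
  u1*u2 < 0 -> 0 < F lam a c u1 v -> F lam a c u2 v < 0 ->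
  exists z, reachable lam a c wm wp v z /\ 0 < F lam a c u2 z /\ F lam a c u1 z < 0.
Proof.
  intros Hl Ha Hw Hu1 Hu2 Hu12 Hv1 Hv2.
  set (Xc := a*(u1-u2)*u1).
  assert (HXc : 0 < Xc) by (unfold Xc; assert (0 < (u1-u2)*u1) by nra; nra).
  destruct (fwd_axis lam a c wm wp u1 u2 v (Xc/2) Hl Ha Hu1 Hu2 Hu12 Hv1 Hv2 ltac:(lra))
    as [z' [Rvz' [Hz'2 [Hz'1 Hz'1e]]]].
  set (io := -(lam*(fst z' + c/a)) - u2).
  assert (Hz' : z' = P lam a c io u2).
  { rewrite P_sym. apply rootrep; lra. }
  rewrite Hz', FP in Hz'1, Hz'1e by lra.
  assert (Hiu : 0 < io*u1).
  { assert (0 < a*(u1-u2)*io) by (unfold Xc in Hz'1e; nra).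
    assert (0 < a*(u1-u2)*u1) by auto.
    assert (0 < (a*(u1-u2))^2 * (io*u1)) by nra.
    assert (0 < (a*(u1-u2))^2) by nra. nra. }
  assert (Hiu2 : io*u1 < u1*u1).
  { assert (H1 : 0 < a*(u1-u2)*(u1-io)) by (unfold Xc in *; lra).
    assert (H2 : 0 < (a*(u1-u2)*(u1-io))*(a*(u1-u2)*u1)) by (apply Rmult_lt_0_compat; auto).
    assert (Hk : a*(u1-u2) <> 0) by (intro Hk; unfold Xc in HXc; rewrite Hk in HXc; lra).
    assert (H3 : 0 < (a*(u1-u2))^2) by (rewrite <- Rsqr_pow2; apply Rlt_0_sqr; auto).
    replace ((a*(u1-u2)*(u1-io))*(a*(u1-u2)*u1)) with ((a*(u1-u2))^2 * ((u1-io)*u1)) in H2 by ring.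
    assert (0 < (u1-io)*u1).
    { apply Rmult_lt_reg_l with ((a*(u1-u2))^2); auto. lra. }
    nra. }
  assert (Hio : wm <= io <= wp).
  { destruct (Rlt_or_le 0 u1). { assert (0 < io) by nra. assert (io < u1) by nra. lra. }
    assert (u1 < 0) by nra. assert (io < 0) by nra. assert (u1 < io) by nra. lra. }
  assert (Hio0 : io <> 0) by (intro H0; rewrite H0 in Hiu; lra).
  set (tau := 2*(u1-u2)/(-lam*io)).
  assert (Htau : 0 <= tau).
  { unfold tau. rewrite sign_div by (intro; nra).
    assert (0 < (u1-u2)*io) by (assert (0 < ((u1-u2)*u1)*(io*u1)) by (apply Rmult_lt_0_compat; nra); nra).
    unfold Rdiv. apply Rmult_le_pos.
    - replace (2 * (u1 - u2) * (- lam * io)) with (2*(-lam)*((u1-u2)*io)) by ring.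
      apply Rmult_le_pos; [|lra]. lra.
    - left; apply Rinv_0_lt_compat. apply (Rlt_0_sqr (-lam*io)).
      intro H0. apply Rmult_integral in H0. destruct H0; [lra|contradiction]. }
  exists (phi lam a c tau z' io). split; [apply reach_trans with z'; auto; apply reach_step; auto|].
  rewrite Hz', line_move by lra.
  replace (u2 - lam*io*tau) with (2*u1 - u2) by (unfold tau; field; split; lra).
  rewrite !FP by lra.
  assert (io*u2 < 0) by (assert ((io*u1)*(u1*u2) < 0) by nra; nra).
  split; nra.
Qed.

Lemma Creg_cases lam a c w1 w2 z : Creg lam a c w1 w2 z ->
  (0 < F lam a c w1 z /\ F lam a c w2 z < 0) \/ (0 < F lam a c w2 z /\ F lam a c w1 z < 0).
Proof.
  unfold Creg; intro H. destruct (Rlt_or_le 0 (F lam a c w1 z)).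
  - left; split; auto. nra.
  - right. destruct (Rle_lt_or_eq_dec _ _ H0) as [H1|H1].
    + split; auto. nra.
    + rewrite H1 in H. lra.
Qed.

Lemma part2 lam a c wm wp w1 w2 v w : lam < 0 -> 0 < a -> wm < 0 < wp ->
  wm <= w1 -> w1 < 0 -> 0 < w2 -> w2 <= wp ->
  Creg lam a c w1 w2 v -> Creg lam a c w1 w2 w -> reachable lam a c wm wp v w.
Proof.
  intros Hl Ha Hw H1 H2 H3 H4 Hv Hw'.
  assert (A1 : wm <= w1 <= wp) by lra. assert (A2 : wm <= w2 <= wp) by lra.
  assert (B12 : w1*w2 < 0) by nra. assert (B21 : w2*w1 < 0) by nra.
  destruct (Creg_cases _ _ _ _ _ _ Hv) as [[Hv1 Hv2]|[Hv1 Hv2]];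
  destruct (Creg_cases _ _ _ _ _ _ Hw') as [[Hw1 Hw2]|[Hw1 Hw2]].
  - apply (G1 lam a c wm wp w1 w2); auto.
  - destruct (G2 lam a c wm wp w1 w2 v Hl Ha Hw A1 A2 B12 Hv1 Hv2) as [z [Rz [Hz1 Hz2]]].
    apply reach_trans with z; auto. apply (G1 lam a c wm wp w2 w1); auto.
  - destruct (G2 lam a c wm wp w2 w1 v Hl Ha Hw A2 A1 B21 Hv1 Hv2) as [z [Rz [Hz1 Hz2]]].
    apply reach_trans with z; auto. apply (G1 lam a c wm wp w1 w2); auto.
  - apply (G1 lam a c wm wp w2 w1); auto.
Qed.

Lemma Fconv lam a c wm wp q v : wm < wp -> wm <= q <= wp -> 0 < a ->
  F lam a c q v <= Rmax (F lam a c wm v) (F lam a c wp v).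
Proof.
  intros Hw Hq Ha. destruct v as [s t]; unfold F; simpl.
  set (M := Rmax _ _).
  assert (H1 : lam ^ 2 * t + wm * (lam * (c + a * s) + a * wm) <= M) by apply Rmax_l.
  assert (H2 : lam ^ 2 * t + wp * (lam * (c + a * s) + a * wp) <= M) by apply Rmax_r.
  assert (E : (lam ^ 2 * t + q * (lam * (c + a * s) + a * q)) * (wp - wm) =
     (wp - q) * (lam ^ 2 * t + wm * (lam * (c + a * s) + a * wm)) +
     (q - wm) * (lam ^ 2 * t + wp * (lam * (c + a * s) + a * wp)) + a*(q-wm)*(q-wp)*(wp-wm)) by ring.
  assert (a*(q-wm)*(q-wp)*(wp-wm) <= 0).
  { assert (0 <= a*(q-wm)*(wp-wm)) by (apply Rmult_le_pos; [apply Rmult_le_pos|]; lra). nra. }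
  assert ((lam ^ 2 * t + q * (lam * (c + a * s) + a * q)) * (wp - wm) <= M * (wp - wm)) by nra.
  apply Rmult_le_reg_r with (wp - wm); lra.
Qed.

Lemma Cminus_part lam a c wm wp q v tau u : lam < 0 -> 0 < a -> wm < 0 < wp ->
  wm <= q <= wp -> F lam a c wm v < 0 -> F lam a c wp v < 0 -> tau <= 0 ->
  (u = wm \/ u = wp) -> F lam a c u (phi lam a c tau v q) < 0.
Proof.
  intros Hl Ha Hw Hq H1 H2 Ht Hu.
  rewrite Fphi by lra.
  assert (HFq : F lam a c q v <= 0).
  { pose proof (Fconv lam a c wm wp q v ltac:(lra) Hq Ha). unfold Rmax in H; destruct Rle_dec; lra. }
  pose proof (exp_ineq1_le (lam*tau)) as He.
  assert (HG: F lam a c q v - a*q*(q-u) <= 0).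
  { destruct v as [s t]; unfold F in *; cbn [fst snd] in *.
    assert (E : (lam ^ 2 * t + q * (lam * (c + a * s) + a * q) - a*q*(q-u)) * (wp - wm) =
     (wp - q) * (lam ^ 2 * t + wm * (lam * (c + a * s) + a * wm) - a*wm*(wm-u)) +
     (q - wm) * (lam ^ 2 * t + wp * (lam * (c + a * s) + a * wp) - a*wp*(wp-u))) by ring.
    assert (Gm : lam ^ 2 * t + wm * (lam * (c + a * s) + a * wm) - a*wm*(wm-u) < 0).
    { destruct Hu; subst u; [nra|]. assert (0 < a*wm*(wm-wp)) by (assert (0 < wm*(wm-wp)) by nra; nra). lra. }
    assert (Gp : lam ^ 2 * t + wp * (lam * (c + a * s) + a * wp) - a*wp*(wp-u) < 0).
    { destruct Hu; subst u; [|nra]. assert (0 < a*wp*(wp-wm)). { apply Rmult_lt_0_compat; nra. } lra. }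
    assert ((lam ^ 2 * t + q * (lam * (c + a * s) + a * q) - a*q*(q-u)) * (wp - wm) <= 0) by nra.
    nra. }
  assert (0 <= lam*tau) by nra.
  assert (F lam a c q v * (exp (lam*tau) - 1) <= F lam a c q v * (lam*tau)) by nra.
  assert (F lam a c u v < 0) by (destruct Hu; subst; auto).
  nra.
Qed.

Definition Pu lam a c u (z : R*R) := F lam a c u z - a*u^2*exp(lam*(fst z + c/a)/u).

Module DerivAux.
From Coquelicot Require Import Coquelicot.
Lemma Pu_deriv lam a c u q v r : lam <> 0 -> a <> 0 -> u <> 0 ->
  derivable_pt_lim (fun r => exp (-lam*r) * Pu lam a c u (phi lam a c r v q)) r
   (exp (-lam*r) * (lam*a*u*(u-q)) *
     (exp (lam*(fst (phi lam a c r v q) + c/a)/u) - lam*(fst (phi lam a c r v q) + c/a)/u - 1)).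
Proof.
  intros Hl Ha Hu. destruct v as [s0 t0]. unfold Pu, F, phi; cbn [fst snd].
  apply is_derive_Reals.
  auto_derive. { repeat split. }
  change (lam * (s0 + r * q + c / a) * / u) with (lam*(s0+r*q+c/a)/u).
  set (E1 := exp (lam * r)). set (E2 := exp (lam*(s0+r*q+c/a)/u)). set (E0 := exp (-lam*r)).
  field. auto.
Qed.
End DerivAux.
Definition Pu_deriv := DerivAux.Pu_deriv.


Lemma Pu_mono lam a c u q v tau : lam < 0 -> 0 < a -> u <> 0 -> 0 <= u*(u-q) -> tau <= 0 ->
  exp (lam*tau) * Pu lam a c u v <= Pu lam a c u (phi lam a c tau v q).
Proof.
  intros Hl Ha Hu Huq Ht.
  destruct (Req_dec tau 0) as [->|Hne].
  { rewrite phi_init, Rmult_0_r, exp_0; lra. }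
  destruct (MVT_cor2 (fun r => exp (-lam*r) * Pu lam a c u (phi lam a c r v q))
     (fun r => exp (-lam*r) * (lam*a*u*(u-q)) *
     (exp (lam*(fst (phi lam a c r v q) + c/a)/u) - lam*(fst (phi lam a c r v q) + c/a)/u - 1))
     tau 0) as [c0 [Hc0 _]].
  { lra. }
  { intros; apply Pu_deriv; lra. }
  cbv beta in Hc0.
  rewrite phi_init, Rmult_0_r, exp_0, Rmult_1_l in Hc0.
  set (x := lam * (fst (phi lam a c c0 v q) + c / a) / u) in Hc0.
  pose proof (exp_ineq1_le x).
  pose proof (exp_pos (-lam*c0)).
  assert (lam*a*u*(u-q) <= 0).
  { replace (lam*a*u*(u-q)) with (lam*(a*(u*(u-q)))) by ring.
    assert (0 <= a*(u*(u-q))) by (apply Rmult_le_pos; lra). nra. }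
  assert (exp (- lam * c0) * (lam * a * u * (u - q)) * (exp x - x - 1) * (0 - tau) <= 0).
  { assert (0 <= exp x - x - 1) by lra.
    assert (exp (- lam * c0) * (lam * a * u * (u - q)) <= 0) by nra.
    assert (exp (- lam * c0) * (lam * a * u * (u - q)) * (exp x - x - 1) <= 0) by nra.
    nra. }
  assert (HH : Pu lam a c u v <= exp (-lam*tau) * Pu lam a c u (phi lam a c tau v q)) by lra.
  pose proof (exp_pos (lam*tau)).
  apply Rmult_le_compat_l with (r := exp (lam*tau)) in HH; [|lra].
  rewrite <- Rmult_assoc, <- exp_plus in HH.
  replace (lam*tau + - lam*tau) with 0 in HH by ring. rewrite exp_0, Rmult_1_l in HH. exact HH.
Qed.

Lemma Pu_branch_id lam a c u z tau0 : lam <> 0 -> a <> 0 -> u <> 0 ->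
  fst z = - c / a + tau0 * u ->
  Pu lam a c u z = lam^2 * (snd z - snd (phi lam a c tau0 (va a c) u)).
Proof.
  intros Hl Ha Hu Hz. destruct z as [s t]; cbn [fst snd] in *; subst s.
  unfold Pu, F, phi, va; cbn [fst snd].
  replace (lam * (- c / a + tau0 * u + c / a) / u) with (lam*tau0) by (field; auto).
  field; auto.
Qed.

Definition InBranch lam a c u z := 0 < Pu lam a c u z /\ 0 <= (fst z + c/a)*u.

Lemma branch_to lam a c u z tau0 : lam <> 0 -> a <> 0 -> u <> 0 -> 0 <= tau0 ->
  fst z = fst (phi lam a c tau0 (va a c) u) -> snd z > snd (phi lam a c tau0 (va a c) u) ->
  InBranch lam a c u z.
Proof.
  intros Hl Ha Hu Ht H1 H2. unfold phi, va in H1; cbn [fst snd] in H1.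
  assert (0 < lam*lam) by (destruct (Rlt_or_le lam 0); [nra|]; assert (0 < lam) by lra; nra).
  split.
  - rewrite (Pu_branch_id lam a c u z tau0) by auto.
    replace (lam^2) with (lam*lam) by ring.
    apply Rmult_lt_0_compat; lra.
  - rewrite H1. replace ((- c / a + tau0 * u + c / a) * u) with (tau0*(u*u)) by (field; auto).
    apply Rmult_le_pos; [lra|]. apply Rle_0_sqr.
Qed.

Lemma branch_from lam a c u z : lam <> 0 -> a <> 0 -> u <> 0 ->
  InBranch lam a c u z ->
  exists tau0, 0 <= tau0 /\ fst z = fst (phi lam a c tau0 (va a c) u) /\
     snd z > snd (phi lam a c tau0 (va a c) u).
Proof.
  intros Hl Ha Hu [HP Hs].
  assert (0 < lam*lam) by (destruct (Rlt_or_le lam 0); [nra|]; assert (0 < lam) by lra; nra).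
  exists ((fst z + c/a)/u).
  assert (Hf : fst z = - c / a + (fst z + c / a) / u * u) by (field; auto).
  split; [|split].
  - replace ((fst z + c/a)/u) with (((fst z + c/a)*u) * / (u*u)) by (field; auto).
    apply Rmult_le_pos; auto. left; apply Rinv_0_lt_compat.
    destruct (Rlt_or_le u 0); [nra|]; assert (0 < u) by lra; nra.
  - unfold phi, va; cbn [fst snd]. exact Hf.
  - rewrite (Pu_branch_id lam a c u z _ Hl Ha Hu Hf) in HP.
    replace (lam^2) with (lam*lam) in HP by ring.
    assert (0 < snd z - snd (phi lam a c ((fst z + c / a) / u) (va a c) u)).
    { apply Rmult_lt_reg_l with (lam*lam); lra. }
    lra.
Qed.

Lemma Pu_zero lam a c w m : a <> 0 -> fst m + c/a = 0 -> Pu lam a c w m = lam^2 * snd m.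
Proof.
  intros Ha H. unfold Pu, F. rewrite H. replace (lam*0/w) with 0 by (unfold Rdiv; ring).
  rewrite exp_0. replace (c + a * fst m) with (a*(fst m + c/a)) by (field; auto). rewrite H. ring.
Qed.



Lemma branch_step lam a c u u' q v tau : lam < 0 -> 0 < a -> u <> 0 -> u' <> 0 -> u*u' < 0 ->
  0 <= u*(u-q) -> 0 <= u'*(u'-q) -> tau <= 0 -> InBranch lam a c u v ->
  InBranch lam a c u (phi lam a c tau v q) \/ InBranch lam a c u' (phi lam a c tau v q).
Proof.
  intros Hl Ha Hu Hu' Huu Hq Hq' Ht [HP Hs].
  assert (Hf : forall tt vv, fst (phi lam a c tt vv q) = fst vv + tt*q)
    by (intros tt [x y]; reflexivity).
  set (sv := fst v + c/a) in *.
  destruct (Rle_or_lt 0 ((fst (phi lam a c tau v q) + c/a)*u)) as [Hpos|Hneg].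
  - left. split; auto.
    pose proof (Pu_mono lam a c u q v tau Hl Ha Hu Hq Ht). pose proof (exp_pos (lam*tau)).
    assert (0 < exp (lam*tau) * Pu lam a c u v) by (apply Rmult_lt_0_compat; auto). lra.
  - right. rewrite Hf in Hneg.
    replace (fst v + tau*q + c/a) with (sv + tau*q) in Hneg by (unfold sv; ring).
    assert (Htn : tau < 0).
    { destruct (Req_dec tau 0); [subst tau; lra | lra]. }
    assert (Hqu : 0 < q*u) by nra.
    assert (Hqn : q <> 0) by (intro; subst q; lra).
    assert (Hsq : 0 <= sv*q).
    { assert (0 <= (sv*u)*(q*u)) by (apply Rmult_le_pos; lra).
      assert (0 < u*u) by nra. nra. }
    assert (Hfq : (sv + tau*q)*q < 0).
    { assert ((sv + tau*q)*u*(q*u) < 0) by nra. assert (0 < u*u) by nra. nra. }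
    assert (0 < q*q) by nra.
    set (tau1 := - sv / q).
    assert (H1 : tau1 <= 0).
    { unfold tau1. rewrite sign_div by auto.
      replace (- sv * q / (q*q)) with (- (sv*q) * / (q*q)) by (field; auto).
      assert (0 < / (q*q)) by (apply Rinv_0_lt_compat; lra). nra. }
    assert (H2 : tau - tau1 <= 0).
    { unfold tau1. replace (tau - - sv / q) with ((sv + tau*q)*q * / (q*q)) by (field; auto).
      assert (0 < / (q*q)) by (apply Rinv_0_lt_compat; lra). nra. }
    set (m := phi lam a c tau1 v q).
    assert (Hm0 : fst m + c/a = 0).
    { unfold m; rewrite Hf. unfold tau1. replace (fst v + - sv / q * q + c / a) with (sv - sv) by (unfold sv; field; repeat split; lra). ring. }
    assert (Hpm : 0 < Pu lam a c u m).
    { pose proof (Pu_mono lam a c u q v tau1 Hl Ha Hu Hq H1). pose proof (exp_pos (lam*tau1)).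
      assert (0 < exp (lam*tau1) * Pu lam a c u v) by (apply Rmult_lt_0_compat; auto). unfold m; lra. }
    assert (Hpm' : 0 < Pu lam a c u' m).
    { rewrite Pu_zero in * by lra. auto. }
    assert (Heq : phi lam a c tau v q = phi lam a c (tau - tau1) m q).
    { unfold m. rewrite <- phi_comp by lra. f_equal. ring. }
    rewrite Heq. split.
    + pose proof (Pu_mono lam a c u' q m (tau - tau1) Hl Ha Hu' Hq' H2). pose proof (exp_pos (lam*(tau - tau1))).
      assert (0 < exp (lam*(tau-tau1)) * Pu lam a c u' m) by (apply Rmult_lt_0_compat; auto). lra.
    + rewrite <- Heq, Hf. replace (fst v + tau*q + c/a) with (sv + tau*q) by (unfold sv; ring).
      assert ((sv + tau*q)*u*(u*u') > 0) by nra. assert (0 < u*u) by nra. nra.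
Qed.

Lemma Cplus_part lam a c wm wp q v tau : lam < 0 -> 0 < a -> wm < 0 < wp ->
  wm <= q <= wp -> Cplus lam a c wm wp v -> tau <= 0 -> Cplus lam a c wm wp (phi lam a c tau v q).
Proof.
  intros Hl Ha Hw Hq [tau0 [w0 [Ht0 [Hw0 [H1 H2]]]]] Ht.
  assert (Hm : 0 <= wm*(wm-q)) by nra. assert (Hp : 0 <= wp*(wp-q)) by nra.
  assert (Hmp : wm*wp < 0) by nra.
  assert (Hfin : forall u, (u = wm \/ u = wp) -> InBranch lam a c u (phi lam a c tau v q) ->
     Cplus lam a c wm wp (phi lam a c tau v q)).
  { intros u Hu HB. destruct (branch_from lam a c u _ ltac:(lra) ltac:(lra) ltac:(destruct Hu; subst; lra) HB)
      as [t1 [Ht1 [Hf1 Hs1]]].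
    exists t1, u. auto. }
  destruct Hw0 as [->| ->].
  - pose proof (branch_to lam a c wm v tau0 ltac:(lra) ltac:(lra) ltac:(lra) Ht0 H1 H2) as HB.
    destruct (branch_step lam a c wm wp q v tau Hl Ha ltac:(lra) ltac:(lra) Hmp Hm Hp Ht HB).
    + apply (Hfin wm); auto.
    + apply (Hfin wp); auto.
  - pose proof (branch_to lam a c wp v tau0 ltac:(lra) ltac:(lra) ltac:(lra) Ht0 H1 H2) as HB.
    destruct (branch_step lam a c wp wm q v tau Hl Ha ltac:(lra) ltac:(lra) ltac:(nra) Hp Hm Ht HB).
    + apply (Hfin wp); auto.
    + apply (Hfin wm); auto.
Qed.


Theorem lemma1 (lam a c wm wp : R) :
  lam < 0 -> 0 < a -> wm < 0 < wp ->
  (* (1) invariance in negative time of C^- and C^+ *)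
  (forall w, wm <= w <= wp -> forall v, Cminus lam a c wm wp v ->
     forall tau, tau <= 0 -> Cminus lam a c wm wp (phi lam a c tau v w)) /\
  (forall w, wm <= w <= wp -> forall v, Cplus lam a c wm wp v ->
     forall tau, tau <= 0 -> Cplus lam a c wm wp (phi lam a c tau v w)) /\
  (* (2) controllability of C(w1,w2) *)
  (forall w1 w2, wm <= w1 -> w1 < 0 -> 0 < w2 -> w2 <= wp ->
     forall v w, Creg lam a c w1 w2 v -> Creg lam a c w1 w2 w ->
       reachable lam a c wm wp v w).
Proof.
  intros Hl Ha Hw. split; [|split].
  - intros q Hq v [H1 H2] tau Ht. split.
    + apply (Cminus_part lam a c wm wp q v tau wm); auto.
    + apply (Cminus_part lam a c wm wp q v tau wp); auto.
  - intros q Hq v Hv tau Ht. apply Cplus_part; auto.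
  - intros w1 w2 H1 H2 H3 H4 v w Hv Hw'. apply (part2 lam a c wm wp w1 w2); auto.
Qed.
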